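(* Let $r=r(n)\ge3$ be an integer with $r=o(n^{1/2})$, and let $m=m(n)$ be a nonnegative integer. Let $t$ and $\alpha$ be integers with $t=O(1)$ and $0\le\alpha\le rt$. If $H$ is chosen uniformly at random from $\mathcal{H}_r(n,m)$, then the expected number of sets of $t$ edges of $H$ whose union has at most $rt-\alpha$ vertices is $O\bigl(t^\alpha r^{2\alpha}m^tn^{-\alpha}\bigr)$ as $n\to\infty$.
   Context: $\mathcal{H}_r(n,m)$ is the set of all $r$-uniform hypergraphs on vertex set $[n]$ with exactly $m$ edges (each edge an $r$-subset of $[n]$). *)

(* Defs.v *)
From HB Require Import structures.
From mathcomp Require Import all_boot all_order all_algebra.
Set Implicit Arguments. Unset Strict Implicit. Unset Printing Implicit Defensive.
Import Order.TTheory GRing.Theory Num.Theory.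

Definition Hrnm (n r m : nat) : {set {set {set 'I_n}}} :=
  [set H : {set {set 'I_n}} | [forall e in H, #|e| == r] && (#|H| == m)].

Definition count_small (n r t a : nat) (H : {set {set 'I_n}}) : nat :=
  #|[set S : {set {set 'I_n}} |
      [&& S \subset H, #|S| == t & #|cover S| <= r * t - a]]|.

(* expectation of count_small for H uniform in H_r(n,m);
   (0 by convention if H_r(n,m) is empty, since 0^-1 = 0 in rat) *)
Definition expected_small (n r m t a : nat) : rat :=
  ((\sum_(H in Hrnm n r m) @count_small n r t a H)%:R / (#|Hrnm n r m|)%:R)%R.

(* Main.v *)
Require Import Defs.
From HB Require Import structures.
From mathcomp Require Import all_boot all_order all_algebra.
From mathcomp Require Import zify ring lra.
Import Order.TTheory GRing.Theory Num.Theory.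

Lemma bin_le_exp u s : 'C(u, s) <= u ^ s.
Proof.
elim: s => [|s IH]; first by rewrite bin0 expn0.
have h := mul_bin_left u s.
have h1 : s.+1 * 'C(u, s.+1) <= u * u ^ s.
  rewrite h; apply: leq_mul; [exact: leq_subr | exact: IH].
rewrite expnS; apply: leq_trans h1; rewrite mulSn; exact: leq_addr.
Qed.

Lemma bin_shift n r s : s <= r -> r <= n ->
  'C(n, r - s) * (n - r) ^ s <= 'C(n, r) * r ^ s.
Proof.
move=> + rn; elim: s => [|s IH] sr; first by rewrite subn0 !expn0.
have sr' : s <= r by apply: ltnW.
have IH' := IH sr'.
set k := r - s.+1.
have hk : r - s = k.+1 by rewrite /k; lia.
have h := mul_bin_left n k.
rewrite hk in IH'.
have e1 : 'C(n, k) * (n - r) <= r * 'C(n, k.+1).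
  have : 'C(n, k) * (n - r) <= 'C(n, k) * (n - k).
    apply: leq_mul => //; lia.
  move/leq_trans; apply; rewrite mulnC -h; apply: leq_mul => //; lia.
rewrite !expnS.
apply: (@leq_trans (r * 'C(n, k.+1) * (n - r) ^ s)).
  rewrite mulnA; exact: leq_mul.
rewrite -mulnA [X in _ <= X]mulnCA; apply: leq_mul => //.
Qed.

Lemma bin_ratio m M t : m <= M -> 'C(m, t) * M ^ t <= 'C(M, t) * m ^ t.
Proof.
move=> mM; elim: t => [|t IH]; first by rewrite !bin0.
have h1 := mul_bin_left m t.
have h2 := mul_bin_left M t.
suff : t.+1 * ('C(m, t.+1) * M ^ t.+1) <= t.+1 * ('C(M, t.+1) * m ^ t.+1).
  by rewrite leq_mul2l.
rewrite !mulnA h1 h2 !expnS.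
have e : (m - t) * M <= (M - t) * m.
  rewrite !mulnBl mulnC; apply: leq_sub2l; exact: leq_mul.
have := leq_mul e IH.
rewrite -!mulnA.
rewrite [M * ('C(m, t) * _)]mulnA [M * 'C(m,t)]mulnC -mulnA.
rewrite [m * ('C(M, t) * _)]mulnA [m * 'C(M,t)]mulnC -mulnA.
by [].
Qed.

Lemma bin_ident M m t : t <= m -> m <= M ->
  'C(M, m) * 'C(m, t) = 'C(M, t) * 'C(M - t, m - t).
Proof.
move=> tm mM.
have p : 0 < t`! * (m - t)`! * (M - m)`!.
  by rewrite !muln_gt0 !fact_gt0.
apply/eqP; rewrite -(eqn_pmul2r p); apply/eqP.
have e1 := bin_fact tm.
have e2 := bin_fact mM.
have e3 : (m - t) <= (M - t) by lia.
have e4 := bin_fact e3.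
have e5 : t <= M by lia.
have e6 := bin_fact e5.
have e7 : M - t - (m - t) = M - m by lia.
rewrite e7 in e4.
transitivity ('C(M, m) * (('C(m, t) * (t`! * (m - t)`!)) * (M - m)`!)).
  by rewrite !mulnA.
rewrite e1.
transitivity ('C(M, t) * t`! * ('C(M - t, m - t) * ((m - t)`! * (M - m)`!))).
  rewrite e2 e4.
  rewrite -e6.
  ring.
rewrite !mulnA; ring.
Qed.
Local Open Scope ring_scope.
Set Implicit Arguments. Unset Strict Implicit. Unset Printing Implicit Defensive.
Definition Kr (n r : nat) : {set {set 'I_n}} := [set e : {set 'I_n} | #|e| == r].
Definition Dj (n r j : nat) : {set {set {set 'I_n}}} :=
  [set S : {set {set 'I_n}} | (S \subset Kr n r) && (#|S| == j)].
Definition wt (n r : nat) (lam : rat) (U : {set 'I_n}) (j : nat)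
  (S : {set {set 'I_n}}) : rat := lam ^+ (#|U| + r * j - #|U :|: cover S|)%N.
Definition gU (n r : nat) (lam : rat) (U : {set 'I_n}) : rat :=
  \sum_(e in Kr n r) lam ^+ #|e :&: U|.
Arguments wt {n} r lam U j S.
Arguments gU {n} r lam U.

Lemma sum_subset_le (T : finType) (A B : {set T}) (F : T -> rat) :
  A \subset B -> (forall x, x \in B -> 0 <= F x) ->
  \sum_(x in A) F x <= \sum_(x in B) F x.
Proof.
move=> AB F0; rewrite [X in _ <= X](big_setID A) /=.
have -> : B :&: A = A by apply/setIidPr.
rewrite lerDl; apply: sumr_ge0 => x; rewrite inE => /andP[_ xB]; exact: F0.
Qed.

Lemma cover_le n r (S : {set {set 'I_n}}) :
  S \subset Kr n r -> (#|cover S| <= r * #|S|)%N.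
Proof.
move=> SK; apply: leq_trans (leq_card_cover S).1 _.
rewrite (eq_bigr (fun _ => r)); first by rewrite sum_nat_const mulnC.
by move=> A /(subsetP SK); rewrite inE => /eqP.
Qed.

Lemma cover_D1 n (S : {set {set 'I_n}}) e : e \in S ->
  cover S = e :|: cover (S :\ e).
Proof.
move=> eS; rewrite -{1}(setD1K eS) /cover bigcup_setU big_set1 //.
Qed.

Lemma wt_step n r (lam : rat) (U : {set 'I_n}) j S e :
  S \in Dj n r j.+1 -> e \in S ->
  wt r lam U j.+1 S = lam ^+ #|e :&: U| * wt r lam (U :|: e) j (S :\ e).
Proof.
rewrite inE => /andP[SK /eqP cS] eS.
have eK : e \in Kr n r by apply: (subsetP SK).
move: (eK); rewrite inE => /eqP ce.
have S'K : S :\ e \subset Kr n r by apply: subset_trans SK; apply: subsetDl.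
have cS' : #|S :\ e| = j.
  by move: cS; rewrite (cardsD1 e) eS add1n => -[].
have hC := @cover_le n r _ S'K; rewrite cS' in hC.
rewrite /wt -exprD; congr (_ ^+ _).
rewrite (cover_D1 eS) setUA.
set C := cover (S :\ e).
have h1 := cardsUI U e.
have h2 : #|e :&: U| = #|U :&: e| by rewrite setIC.
have h3 := (leq_card_setU (U :|: e) C).1.
have h4 : (#|U :|: e| <= #|U :|: e :|: C|)%N by apply: subset_leq_card; apply: subsetUl.
rewrite h2; rewrite -/C in hC; lia.
Qed.

Lemma wt_ge0 n r (lam : rat) (U : {set 'I_n}) j S : 0 <= lam -> 0 <= wt r lam U j S.
Proof. by move=> l0; rewrite /wt exprn_ge0. Qed.

Lemma Dj0 n r : Dj n r 0 = [set set0].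
Proof.
apply/setP => S; rewrite !inE cards_eq0.
apply/andP/eqP => [[_ /eqP] //|->]; by rewrite sub0set.
Qed.

Lemma mainA n r (lam c : rat) t : 1 <= lam -> 0 <= c ->
  (forall U : {set 'I_n}, (#|U| + r <= r * t)%N -> gU r lam U <= c * #|Kr n r|%:R) ->
  forall j (U : {set 'I_n}), (#|U| + r * j <= r * t)%N ->
  \sum_(S in Dj n r j) wt r lam U j S <= (c * #|Kr n r|%:R) ^+ j.
Proof.
move=> l1 c0 hg j; have l0 : 0 <= lam by apply: le_trans l1.
elim: j => [|j IH] U hU.
  rewrite Dj0 big_set1 /wt /cover big_set0 setU0 muln0 addn0 subnn expr0 //.
set cM := c * #|Kr n r|%:R.
have cM0 : 0 <= cM by rewrite /cM mulr_ge0 // ler0n.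
apply: (@le_trans _ _ (\sum_(S in Dj n r j.+1) \sum_(e in S) wt r lam U j.+1 S)).
  apply: ler_sum => S SD; rewrite sumr_const.
  move: (SD); rewrite inE => /andP[_ /eqP ->].
  by rewrite mulrS lerDl mulrn_wge0 // wt_ge0.
rewrite (exchange_big_dep (fun e => e \in Kr n r)) /=; last first.
  by move=> S e; rewrite inE => /andP[SK _] eS; apply: (subsetP SK).
apply: (@le_trans _ _ (\sum_(e in Kr n r) lam ^+ #|e :&: U| * cM ^+ j)).
  apply: ler_sum => e eK.
  rewrite (eq_bigr (fun S => lam ^+ #|e :&: U| * wt r lam (U :|: e) j (S :\ e))); last first.
    by move=> S /andP[SD eS]; apply: wt_step.
  rewrite -mulr_sumr; apply: ler_wpM2l; first by rewrite exprn_ge0.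
  have -> : \sum_(i | (i \in Dj n r j.+1) && (e \in i)) wt r lam (U :|: e) j (i :\ e)
      = \sum_(i in [set S in Dj n r j.+1 | e \in S]) wt r lam (U :|: e) j (i :\ e).
    by apply: eq_bigl => S; rewrite !inE.
  rewrite -(big_imset (fun S' => wt r lam (U :|: e) j S')) /=; last first.
    move=> S1 S2; rewrite !inE => /andP[_ e1] /andP[_ e2] h.
    by rewrite -(setD1K e1) -(setD1K e2) h.
  apply: le_trans (IH (U :|: e) _); last first.
    move: eK; rewrite inE => /eqP ce.
    have := leq_card_setU U e; rewrite ce => -[h _]; move: hU; rewrite mulnS; lia.
  apply: sum_subset_le => [|S _]; last by apply: wt_ge0.
  apply/subsetP => S' /imsetP[S]; rewrite !inE => /andP[/andP[SK /eqP cS] eS] ->.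
  apply/andP; split.
    by apply: subset_trans SK; apply: subsetDl.
  by move: cS; rewrite (cardsD1 e) eS add1n => -[->].
rewrite -mulr_suml exprS; apply: ler_pM; [by apply: sumr_ge0 => i _; rewrite exprn_ge0|by rewrite exprn_ge0| |by []].
apply: hg; move: hU; rewrite mulnS; lia.
Qed.
Lemma card_Kr n r : #|Kr n r| = 'C(n, r).
Proof. by rewrite card_draws card_ord. Qed.

Lemma card_slice n r (U : {set 'I_n}) s :
  (#|[set e in Kr n r | #|e :&: U| == s]| <= (s <= r) * ('C(#|U|, s) * 'C(n, r - s)))%N.
Proof.
case: (leqP s r) => sr; last first.
  rewrite mul0n leqn0 cards_eq0; apply/eqP/setP => e; rewrite !inE.
  apply/negbTE; apply/negP => /andP[/eqP ce /eqP cs].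
  have : (#|e :&: U| <= #|e|)%N by apply: subset_leq_card; apply: subsetIl.
  lia.
rewrite mul1n.
set A := [set e in Kr n r | #|e :&: U| == s].
pose f := fun e : {set 'I_n} => (e :&: U, e :\: U).
have finj : {in A &, injective f}.
  move=> e1 e2 _ _ [h1 h2]; by rewrite -(setID e1 U) -(setID e2 U) h1 h2.
rewrite -(card_in_imset finj).
apply: (@leq_trans #|setX [set X : {set 'I_n} | (X \subset U) && (#|X| == s)]
                           [set Y : {set 'I_n} | #|Y| == (r - s)%N]|).
  apply: subset_leq_card; apply/subsetP => p /imsetP[e].
  rewrite !inE => /andP[/eqP ce /eqP cs] ->; rewrite /f /=.
  rewrite subsetIr cs eqxx /= cardsD ce cs //.
by rewrite cardsX cards_draws card_draws card_ord.
Qed.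
Lemma geom (y : rat) N : 0 <= y -> y < 1 -> \sum_(s < N) y ^+ s <= (1 - y)^-1.
Proof.
move=> y0 y1.
have e : (\sum_(s < N) y ^+ s) * (1 - y) = 1 - y ^+ N.
  elim: N => [|N IH]; first by rewrite big_ord0 mul0r expr0 subrr.
  rewrite big_ord_recr /= mulrDl IH exprS; ring.
have p : 0 < 1 - y by rewrite subr_gt0.
rewrite -div1r ler_pdivlMr // e; rewrite lerBlDr lerDl exprn_ge0 //.
Qed.

Lemma term_bound (lam : rat) n r u s : 0 <= lam -> (r < n)%N ->
  lam ^+ s * ((s <= r) * ('C(u, s) * 'C(n, r - s)))%:R <=
  'C(n, r)%:R * (lam * u%:R * r%:R / (n - r)%:R) ^+ s.
Proof.
move=> l0 rn.
have d0 : 0 < ((n - r) ^ s)%:R :> rat by rewrite ltr0n expn_gt0; apply/orP; left; lia.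
case: (leqP s r) => sr; last first.
  rewrite mul0n mulr0 mulr_ge0 // ?ler0n // exprn_ge0 //.
  by rewrite divr_ge0 ?mulr_ge0 ?ler0n.
change (nat_of_bool true) with 1%N; rewrite mul1n.
have h1 : ('C(u, s))%:R <= (u ^ s)%:R :> rat by rewrite ler_nat bin_le_exp.
have h2 : ('C(n, r - s) * (n - r) ^ s)%:R <= ('C(n, r) * r ^ s)%:R :> rat.
  by rewrite ler_nat bin_shift //; apply: ltnW.
rewrite !natrM in h2 *; rewrite !natrX in h1 h2 d0.
rewrite expr_div_n !exprMn.
set L := lam ^+ s; set X := (u%:R ^+ s : rat); set R := (r%:R ^+ s : rat).
set D := ((n - r)%:R ^+ s : rat).
set Cu := ('C(u, s))%:R : rat; set Cn := ('C(n, r - s))%:R : rat; set M := ('C(n, r))%:R : rat.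
have L0 : 0 <= L by rewrite exprn_ge0.
have Cu0 : 0 <= Cu by rewrite ler0n.
have Cn0 : 0 <= Cn by rewrite ler0n.
have -> : M * (L * X * R / D) = (L * X) * (M * R) / D by rewrite /=; field; rewrite gt_eqF.
rewrite ler_pdivlMr //.
have -> : L * (Cu * Cn) * D = L * (Cu * (Cn * D)) by ring.
have -> : L * X * (M * R) = L * (X * (M * R)) by ring.
apply: ler_pM => //; first by rewrite mulr_ge0 // mulr_ge0 // ltW.
apply: ler_pM => //; by rewrite mulr_ge0 // ltW.
Qed.

Lemma gbound n r (lam : rat) (U : {set 'I_n}) : 0 <= lam -> (r < n)%N ->
  lam * #|U|%:R * r%:R / (n - r)%:R < 1 ->
  gU r lam U <= 'C(n, r)%:R * (1 - lam * #|U|%:R * r%:R / (n - r)%:R)^-1.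
Proof.
move=> l0 rn; set y := lam * _ * _ / _ => y1.
have y0 : 0 <= y by rewrite divr_ge0 ?mulr_ge0 ?ler0n.
have step : forall e : {set 'I_n},
    lam ^+ #|e :&: U| = \sum_(s < n.+1) (#|e :&: U| == s)%:R * lam ^+ s.
  move=> e; have k : (#|e :&: U| < n.+1)%N.
    by rewrite ltnS; apply: leq_trans (max_card _) _; rewrite card_ord.
  rewrite (bigD1 (Ordinal k)) //= eqxx mul1r big1 ?addr0 // => s hs.
  suff -> : (#|e :&: U| == s) = false by rewrite mul0r.
  apply/negbTE; apply: contra hs => /eqP h; apply/eqP; apply: val_inj; by rewrite /= h.
rewrite /gU (eq_bigr _ (fun e _ => step e)) exchange_big /=.
apply: (@le_trans _ _ (\sum_(s < n.+1) 'C(n, r)%:R * y ^+ s)); last first.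
  by rewrite -mulr_sumr ler_wpM2l ?ler0n ?geom.
apply: ler_sum => s _.
rewrite -mulr_suml.
have -> : \sum_(e in Kr n r) (#|e :&: U| == s)%:R
          = #|[set e in Kr n r | #|e :&: U| == s]|%:R :> rat.
  rewrite -natr_sum; congr (_%:R).
  rewrite -sum1_card [in RHS]big_mkcond [in LHS]big_mkcond /=.
  apply: eq_bigr => e _; rewrite !inE.
  by case: (e \in Kr n r); case: (_ == _).
apply: le_trans (term_bound #|U| s l0 rn); rewrite mulrC.
apply: ler_wpM2l; first by rewrite exprn_ge0.
by rewrite ler_nat card_slice.
Qed.

Definition Ds (n r t a : nat) : {set {set {set 'I_n}}} :=
  [set S : {set {set 'I_n}} | [&& S \subset Kr n r, #|S| == t & (#|cover S| <= r * t - a)%N]].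

Lemma Hr_eq n r m : Hrnm n r m = [set H : {set {set 'I_n}} | (H \subset Kr n r) && (#|H| == m)].
Proof.
apply/setP => H; rewrite !inE; congr (_ && _).
apply/forallP/subsetP => [h e eH|h e]; first by rewrite inE; exact: (implyP (h e)).
by apply/implyP => /h; rewrite inE.
Qed.

Lemma card_Hr n r m : #|Hrnm n r m| = 'C('C(n, r), m).
Proof. by rewrite Hr_eq cards_draws card_Kr. Qed.

Lemma card_sum (T : finType) (A : {set T}) (P : pred T) :
  #|[set x in A | P x]| = (\sum_(x in A) P x)%N.
Proof.
rewrite -sum1_card [in LHS]big_mkcond [in RHS]big_mkcond /=.
by apply: eq_bigr => x _; rewrite !inE; case: (x \in A); case: (P x).
Qed.

Lemma count_eq n r t a (H : {set {set 'I_n}}) : H \subset Kr n r ->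
  @count_small n r t a H = #|[set S in Ds n r t a | S \subset H]|.
Proof.
move=> HK; rewrite /count_small; apply: eq_card => S; rewrite !inE.
case SH: (S \subset H); rewrite ?andbF //= andbT.
by rewrite (subset_trans SH HK).
Qed.

Lemma card_ext n r m t (S : {set {set 'I_n}}) : S \subset Kr n r -> #|S| = t ->
  (#|[set H in Hrnm n r m | S \subset H]| <= 'C('C(n, r) - t, m - t))%N.
Proof.
move=> SK cS.
have inj : {in [set H in Hrnm n r m | S \subset H] &, injective (fun H => H :\: S)}.
  move=> H1 H2; rewrite !inE => /andP[_ s1] /andP[_ s2] /= h.
  by rewrite -(setID H1 S) -(setID H2 S) (setIidPr s1) (setIidPr s2) h.
rewrite -(card_in_imset inj).
have -> : 'C('C(n, r) - t, m - t) = #|[set B : {set {set 'I_n}} | (B \subset Kr n r :\: S) && (#|B| == (m - t)%N)]|.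
  by rewrite cards_draws cardsD (setIidPr SK) card_Kr cS.
apply: subset_leq_card; apply/subsetP => B /imsetP[H]; rewrite Hr_eq !inE.
move=> /andP[/andP[HK /eqP cH] SH] ->; rewrite setSD //= cardsD (setIidPr SH) cH cS //.
Qed.

Lemma num_bound n r m t a :
  (\sum_(H in Hrnm n r m) @count_small n r t a H
     <= #|Ds n r t a| * 'C('C(n, r) - t, m - t))%N.
Proof.
rewrite (eq_bigr (fun H : {set {set 'I_n}} => \sum_(S in Ds n r t a) (S \subset H))%N); last first.
  by move=> H; rewrite Hr_eq inE => /andP[HK _]; rewrite count_eq // card_sum.
rewrite exchange_big /= -sum_nat_const; apply: leq_sum => S.
rewrite inE => /and3P[SK /eqP cS _]; rewrite -card_sum; exact: card_ext.
Qed.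

Lemma count_zero n r m t a H : H \in Hrnm n r m -> (m < t)%N ->
  @count_small n r t a H = 0%N.
Proof.
rewrite Hr_eq inE => /andP[_ /eqP cH] mt; rewrite /count_small.
apply/eqP; rewrite cards_eq0; apply/eqP/setP => S; rewrite !inE.
apply/negbTE/negP => /and3P[SH /eqP cS _].
have := subset_leq_card SH; rewrite cS cH; lia.
Qed.

Lemma bin_ratio2 M m t : (t <= m)%N -> (m <= M)%N ->
  ('C(M - t, m - t) * M ^ t <= 'C(M, m) * m ^ t)%N.
Proof.
move=> tm mM.
have p : (0 < 'C(M, t))%N by rewrite bin_gt0; lia.
rewrite -(leq_pmul2l p).
have e := @bin_ident M m t tm mM.
have h := @bin_ratio m M t mM.
have -> : ('C(M, t) * ('C(M - t, m - t) * M ^ t) = 'C(M, m) * ('C(m, t) * M ^ t))%N.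
  by rewrite mulnA -e; ring.
have -> : ('C(M, t) * ('C(M, m) * m ^ t) = 'C(M, m) * ('C(M, t) * m ^ t))%N by ring.
exact: leq_mul.
Qed.

Lemma E_bound n r m t a (lam c : rat) : 1 <= lam -> 0 <= c -> (r <= n)%N ->
  (a <= r * t)%N ->
  (forall U : {set 'I_n}, (#|U| + r <= r * t)%N -> gU r lam U <= c * 'C(n, r)%:R) ->
  expected_small n r m t a <= c ^+ t * m%:R ^+ t / lam ^+ a.
Proof.
move=> l1 c0 rn ar hg.
have l0 : 0 < lam by apply: lt_le_trans ltr01 l1.
have R0 : 0 <= c ^+ t * m%:R ^+ t / lam ^+ a.
  by rewrite divr_ge0 ?mulr_ge0 ?exprn_ge0 ?ler0n // ltW.
set M := 'C(n, r).
have M0 : (0 < M)%N by rewrite bin_gt0.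
have hD : #|Ds n r t a|%:R * lam ^+ a <= (c * M%:R) ^+ t.
  have hg' : forall U : {set 'I_n}, (#|U| + r <= r * t)%N ->
      gU r lam U <= c * #|Kr n r|%:R by move=> U hU; rewrite card_Kr; exact: hg.
  have h0 : (#|(set0 : {set 'I_n})| + r * t <= r * t)%N by rewrite cards0.
  have := mainA l1 c0 hg' h0; rewrite card_Kr => h; apply: le_trans h.
  rewrite mulr_natl -sumr_const.
  apply: (@le_trans _ _ (\sum_(S in Ds n r t a) wt r lam set0 t S)).
    apply: ler_sum => S; rewrite inE => /and3P[_ _ hc].
    rewrite /wt cards0 add0n set0U; apply: ler_weXn2l => //; lia.
  apply: sum_subset_le => [|S _]; last by apply: wt_ge0; apply: ltW.
  by apply/subsetP => S; rewrite !inE => /and3P[-> -> _].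
case: (leqP t m) => tm; last first.
  by rewrite /expected_small big1 ?mul0r // => H HH; apply: count_zero HH tm.
case: (leqP m M) => mM; last first.
  by rewrite /expected_small card_Hr bin_small // invr0 mulr0.
rewrite /expected_small card_Hr.
have Cp : 0 < ('C(M, m))%:R :> rat by rewrite ltr0n bin_gt0.
rewrite ler_pdivrMr //.
apply: (@le_trans _ _ (#|Ds n r t a| * 'C(M - t, m - t))%:R); first by rewrite ler_nat num_bound.
have h2 : ('C(M - t, m - t))%:R * M%:R ^+ t <= ('C(M, m))%:R * m%:R ^+ t :> rat.
  by rewrite -!natrX -!natrM ler_nat bin_ratio2.
rewrite exprMn in hD.
rewrite natrM.
set D := (#|Ds n r t a|)%:R in hD *.
set C' := ('C(M - t, m - t))%:R in h2 *.
set L := lam ^+ a in hD *; set P := M%:R ^+ t in hD h2 *.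
set Cm := ('C(M, m))%:R in h2 Cp *.
have Lp : 0 < L by rewrite exprn_gt0.
have Pp : 0 < P by rewrite exprn_gt0 // ltr0n.
have -> : c ^+ t * m%:R ^+ t / L * Cm = (c ^+ t * m%:R ^+ t * Cm) / L.
  by field; rewrite gt_eqF.
rewrite ler_pdivlMr // -(ler_pM2r Pp).
have -> : D * C' * L * P = (D * L) * (C' * P) by ring.
have -> : c ^+ t * m%:R ^+ t * Cm * P = (c ^+ t * P) * (Cm * m%:R ^+ t) by ring.
apply: ler_pM => //; by rewrite mulr_ge0 ?ler0n // ltW.
Qed.
Local Close Scope ring_scope.
Unset Implicit Arguments.

Theorem lemma2p2 (r m t a : nat -> nat)
  (hr3 : forall n, 3 <= r n)
  (hr_small : forall eps : rat, (0 < eps)%R ->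
     exists N, forall n, N <= n -> ((r n ^ 2)%:R <= eps * n%:R)%R)
  (ht : exists T, forall n, t n <= T)
  (ha : forall n, a n <= r n * t n) :
  exists C : rat, (0 < C)%R /\ exists N, forall n, N <= n ->
    (expected_small n (r n) (m n) (t n) (a n)
      <= C * (t n)%:R ^+ a n * (r n)%:R ^+ (2 * a n) * (m n)%:R ^+ t n
           / (n%:R ^+ a n))%R.
Proof.
Local Open Scope ring_scope.
case: ht => T hT.
have eps0 : (0:rat) < ((2 * T + 2)%N%:R)^-1 by rewrite invr_gt0 ltr0n addn2.
case: (hr_small _ eps0) => N0 hN.
exists ((2 * T + 1)%N%:R ^+ T); split; first by rewrite exprn_gt0 // ltr0n addn1.
exists N0 => n hn.
have hr := hN n hn.
move: (hr3 n) (hT n) (ha n) hr.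
set rr := r n; set tt := t n; set aa := a n; set mm := m n => r3 tT ar hr.
have hnat : ((2 * T + 2) * rr ^ 2 <= n)%N.
  rewrite -(ler_nat rat) natrM.
  have k0 : (0:rat) < (2 * T + 2)%N%:R by rewrite ltr0n addn2.
  have := ler_wpM2l (ltW k0) hr; rewrite mulrA mulfV ?mul1r //; exact: lt0r_neq0.
have rn : (rr < n)%N by nia.
have c1 : (1:rat) <= (2 * T + 1)%N%:R by rewrite ler1n; lia.
case: (posnP tt) => [t0|tpos].
  have a0 : aa = 0%N by move: ar; rewrite t0 muln0; lia.
  apply: le_trans (E_bound (lam := 1) (c := (2 * T + 1)%N%:R) mm (lexx 1) (le_trans ler01 c1) (ltnW rn) ar _) _.
    move=> U; rewrite t0 muln0; lia.
  rewrite t0 a0 !expr0 ?mulr1 ?divr1 ?invr1 ?mulr1 ?mul1r; exact: exprn_ege1.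
pose lam : rat := n%:R / (rr ^ 2 * tt)%N%:R.
have rt0 : (0:rat) < (rr ^ 2 * tt)%N%:R by rewrite ltr0n; nia.
have l1 : 1 <= lam by rewrite /lam ler_pdivlMr // mul1r ler_nat; nia.
apply: le_trans (E_bound (lam := lam) (c := (2 * T + 1)%N%:R) mm l1 (le_trans ler01 c1) (ltnW rn) ar _) _.
  move=> U hU.
  move: hU; set u := #|U| => hU.
  have dpos : (0:rat) < (n - rr)%N%:R by rewrite ltr0n subn_gt0.
  have key : (2 * n * u + rr * (n - rr) <= 2 * tt * rr * (n - rr))%N.
    have h1 : (u <= rr * (tt - 1))%N by rewrite mulnBr muln1; lia.
    have h2 : (2 * tt * rr <= n + rr)%N by nia.
    nia.
  pose y : rat := lam * u%:R * rr%:R / (n - rr)%N%:R.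
  have rd : (0:rat) < (rr * (n - rr))%N%:R by rewrite ltr0n muln_gt0 subn_gt0 rn andbT; lia.
  have hy : y * (2 * tt)%N%:R + 1 <= (2 * tt)%N%:R.
    have -> : y * (2 * tt)%N%:R = (2 * n * u)%N%:R / (rr * (n - rr))%N%:R.
      rewrite /y /lam !natrM ?natrX; field.
      by apply/and3P; split; rewrite pnatr_eq0 -lt0n ?subn_gt0 //; lia.
    rewrite -(ler_pM2r rd) mulrDl divfK ?mul1r; last exact: lt0r_neq0.
    by rewrite -!natrM -natrD ler_nat mulnA.
  have K0 : (0:rat) < (2 * tt)%N%:R by rewrite ltr0n; lia.
  have y1 : y < 1.
    have : y * (2 * tt)%N%:R < 1 * (2 * tt)%N%:R by rewrite mul1r; lra.
    by rewrite ltr_pM2r.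
  have l0 : 0 <= lam by apply: le_trans ler01 l1.
  apply: le_trans (gbound l0 rn y1) _.
  rewrite mulrC; apply: ler_wpM2r; first by rewrite ler0n.
  have y1' : 0 < 1 - y by rewrite subr_gt0.
  apply: (@le_trans _ _ (2 * tt)%N%:R); last by rewrite ler_nat; lia.
  rewrite -div1r ler_pdivrMr //; change (1 <= (2 * tt)%N%:R * (1 - y)); nra.
have n0 : (0:rat) < n%:R by rewrite ltr0n; lia.
pose Q : rat := tt%:R ^+ aa * rr%:R ^+ (2 * aa) * mm%:R ^+ tt / n%:R ^+ aa.
have -> : (2 * T + 1)%N%:R ^+ tt * mm%:R ^+ tt / lam ^+ aa = (2 * T + 1)%N%:R ^+ tt * Q.
  rewrite /Q /lam expr_div_n natrM natrX exprMn -exprM mulnC.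
  field; apply/andP; split; rewrite ?expf_neq0 // ?pnatr_eq0 -?lt0n //; lia.
have -> : (2 * T + 1)%N%:R ^+ T * tt%:R ^+ aa * rr%:R ^+ (2 * aa) * mm%:R ^+ tt / n%:R ^+ aa
   = (2 * T + 1)%N%:R ^+ T * Q by rewrite /Q !mulrA.
apply: ler_wpM2r.
  by rewrite /Q divr_ge0 ?mulr_ge0 ?exprn_ge0 ?ler0n.
exact: ler_weXn2l.
Qed.
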